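(* Let $S$ be a numerical semigroup with depth $q$, $\rho=qm-c$, minimal generating set $P$, $D=S^*+S^*$, $L=\{s\in S: s<c\}$ and $X$ its set of nonzero Apéry elements. Then $$|P|\,|L|-c\ =\ |P|\,\tau(X)-|X\cap D|\,q+\rho.$$
   Context: A numerical semigroup is a subset $S\subseteq\mathbb N$ containing $0$, closed under addition, with finite complement. $S^*=S\setminus\{0\}$, $m=\min S^*$, $c=\max(\mathbb Z\setminus S)+1$, $q=\lceil c/m\rceil$, $\rho=qm-c$. $P=S^*\setminus D$. $X=\{s\in S^*: s-m\notin S\}$. For $x\in S$, $\delta(x)$ is the unique integer with $x+\delta(x)m\in[c,c+m-1]$, and $\tau(A)=\sum_{x\in A}\delta(x)$. *)

(* Defs.v *)
From mathcomp Require Import all_boot all_order all_algebra.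
Set Implicit Arguments. Unset Strict Implicit. Unset Printing Implicit Defensive.
Import Order.TTheory GRing.Theory Num.Theory.

Definition numerical_semigroup (S : pred nat) : Prop :=
  [/\ S 0, (forall a b, S a -> S b -> S (a + b))
    & exists N, forall n, N <= n -> S n].

Definition is_multiplicity (S : pred nat) (m : nat) : Prop :=
  [/\ S m, 0 < m & forall s, S s -> 0 < s -> m <= s].

(* c = max(Z \ S) + 1, i.e. the least c such that every n >= c lies in S *)
Definition is_conductor (S : pred nat) (c : nat) : Prop :=
  (forall n, c <= n -> S n) /\
  (forall k, (forall n, k <= n -> S n) -> c <= k).

Definition Sstar (S : pred nat) : pred nat := fun x => S x && (0 < x).

(* D = S^* + S^* *)
Definition Dset (S : pred nat) : pred nat :=
  fun x => has (fun a => Sstar S a && Sstar S (x - a) && (a < x)) (iota 0 x).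

Definition Pset (S : pred nat) : pred nat :=
  fun x => Sstar S x && ~~ Dset S x.

(* X = { s in S^* : s - m notin S } (nonzero Apery elements w.r.t. m);
   for s in S^* we have s >= m, so nat subtraction is exact *)
Definition Xset (S : pred nat) (m : nat) : pred nat :=
  fun x => Sstar S x && ~~ S (x - m).

Definition Lset (S : pred nat) (c : nat) : pred nat :=
  fun x => S x && (x < c).

(* q = ceil(c/m) *)
Definition depth (m c : nat) : nat := (c + m - 1) %/ m.

Definition rho (m c : nat) : int := ((depth m c * m)%:Z - c%:Z)%R.

(* delta(x) = the unique integer d with x + d m in [c, c+m-1],
   i.e. d = floor((c + m - 1 - x) / m) *)
Definition delta (m c x : nat) : int :=
  ((((c + m - 1)%:Z - x%:Z)%R %/ m%:Z)%Z).

(* tau(A) = sum_{x in A} delta(x), A given by a duplicate-free list *)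
Definition tau (m c : nat) (A : seq nat) : int :=
  (\sum_(x <- A) delta m c x)%R.

(* Main.v *)
Require Import Defs.
From mathcomp Require Import all_boot all_order all_algebra.
From mathcomp Require Import zify ring.
Import Order.TTheory GRing.Theory Num.Theory.
Set Implicit Arguments. Unset Strict Implicit.

Lemma Smul (S : pred nat) m a j : (forall a b, S a -> S b -> S (a+b)) -> S m ->
  S a -> S (a + j * m).
Proof.
move=> Sadd Sm Sa; elim: j => [|j IH]; first by rewrite mul0n addn0.
by rewrite mulSn addnCA; apply: Sadd.
Qed.

Lemma memS (S : pred nat) m lX : (forall x, (x \in lX) = Xset S m x) -> S 0 ->
  forall a, a \in 0 :: lX -> S a.
Proof.
move=> hX S0 a; rewrite in_cons => /orP [/eqP -> //|].
by rewrite hX => /andP [/andP [] ].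
Qed.

Lemma incongr (S : pred nat) m lX : (forall a b, S a -> S b -> S (a+b)) -> S m ->
  (forall x, (x \in lX) = Xset S m x) -> S 0 ->
  forall a b, a \in 0 :: lX -> b \in 0 :: lX -> a < b -> a %% m != b %% m.
Proof.
move=> Sadd Sm hX S0 a b ha hb ab; apply/negP => /eqP eab.
have Sa := memS hX S0 ha.
have : b \in lX by move: hb; rewrite in_cons => /orP [/eqP b0|//]; lia.
rewrite hX => /andP [_]; apply/negP/negPn.
have : m %| b - a by rewrite -eqn_mod_dvd ?eab // ltnW.
case/dvdnP => k hk.
case: k hk => [|k] hk; first by lia.
have -> : b - m = a + k * m by rewrite mulSn in hk; lia.
exact: Smul.
Qed.

Lemma exist_ap (S : pred nat) m lX : (forall a b, S a -> S b -> S (a+b)) ->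
  is_multiplicity S m ->
  (forall x, (x \in lX) = Xset S m x) -> S 0 ->
  forall n, S n -> exists2 a, a \in 0 :: lX & (a <= n) && (a %% m == n %% m).
Proof.
move=> Sadd [Sm m0 mmin] hX S0; elim/ltn_ind => n IH Sn.
case: (posnP n) => [->|n0]; first by exists 0; [rewrite mem_head | rewrite leqnn eqxx].
have mn := mmin n Sn n0.
case Snm: (S (n - m)).
  have lt : n - m < n by lia.
  have [a ha /andP [an am]] := IH (n - m) lt Snm.
  exists a => //; apply/andP; split; first by lia.
  by rewrite (eqP am) -{2}(subnK mn) modnDr.
exists n; last by rewrite leqnn eqxx.
by rewrite in_cons hX /Xset /Sstar Sn n0 Snm orbT.
Qed.

Lemma count_le1 (T : eqType) (p : pred T) s : uniq s ->
  {in s &, forall x y, p x -> p y -> x = y} -> count p s <= 1.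
Proof.
elim: s => [//|x s IH] /= /andP [xs us] h.
case px: (p x) => /=; last first.
  by rewrite add0n IH // => y z ys zs; apply: h; rewrite in_cons ?ys ?zs orbT.
rewrite add1n ltnS leqn0 eqn0Ngt -has_count; apply/hasP => -[y ys py].
have ys' : y \in x :: s by rewrite in_cons ys orbT.
have := h x y (mem_head _ _) ys' px py.
by move=> exy; rewrite exy ys in xs.
Qed.

Lemma uniq0X (S : pred nat) m lX : uniq lX -> (forall x, (x \in lX) = Xset S m x) ->
  uniq (0 :: lX).
Proof. by move=> uX hX /=; rewrite uX hX /Xset /Sstar ltnn /= andbF. Qed.

Lemma Scount (S : pred nat) m lX : numerical_semigroup S -> is_multiplicity S m ->
  uniq lX -> (forall x, (x \in lX) = Xset S m x) ->
  forall n, (S n : nat) = count (fun a => (a <= n) && (a %% m == n %% m)) (0 :: lX).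
Proof.
move=> [S0 Sadd _] hm uX hX n; have [Sm m0 _] := hm.
case Sn: (S n).
  apply/eqP; rewrite eqn_leq; apply/andP; split.
    have [a ha pa] := exist_ap Sadd hm hX S0 Sn.
    by rewrite -has_count; apply/hasP; exists a.
  apply: count_le1; first exact: uniq0X uX hX.
  move=> a b ha hb /andP [an am] /andP [bn bm].
  case: (ltngtP a b) => // ab.
    by have := incongr Sadd Sm hX S0 ha hb ab; rewrite (eqP am) (eqP bm) eqxx.
  by have := incongr Sadd Sm hX S0 hb ha ab; rewrite (eqP am) (eqP bm) eqxx.
apply/esym/eqP; rewrite eqn0Ngt -has_count; apply/hasP => -[a ha /andP [an am]].
have : m %| n - a by rewrite -eqn_mod_dvd // eq_sym.
case/dvdnP => k hk.
have : S (a + k * m) by apply: Smul => //; exact: memS hX S0 _ ha.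
have e : a + k * m = n by lia.
by rewrite e Sn.
Qed.

Lemma count_sum (T : Type) (p : pred T) s : count p s = \sum_(x <- s) (p x : nat).
Proof. by elim: s => [|x s IH]; rewrite ?big_nil ?big_cons //= IH. Qed.

Lemma count_ap m a j : 0 < m ->
  count (fun n => (a <= n) && (a %% m == n %% m)) (iota 0 (a + j)) = (j + m - 1) %/ m.
Proof.
move=> m0; elim: j => [|j IH].
  rewrite addn0 (eq_in_count (a2 := pred0)) ?count_pred0.
    by rewrite divn_small //; lia.
  by move=> n; rewrite mem_iota /= => hn; apply/negbTE; lia.
rewrite addnS -addn1 iotaD count_cat IH /= add0n addn0.
have -> : j.+1 + m - 1 = (j + m - 1).+1 by lia.
rewrite divnS // addnC; congr (_ + _).
have -> : (j + m - 1).+1 = j + m by lia.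
rewrite leq_addr /= dvdn_addl // -{1}(addn0 a) eqn_modDl mod0n eq_sym.
by rewrite /dvdn; case: (j %% m == 0).
Qed.

Lemma count_ap2 m a c : 0 < m -> a < c + m ->
  count (fun n => (a <= n) && (a %% m == n %% m)) (iota 0 c) = (c + m - 1 - a) %/ m.
Proof.
move=> m0 ac; case: (leqP a c) => h.
  have -> : c = a + (c - a) by lia.
  rewrite count_ap //; congr (_ %/ _); lia.
rewrite (eq_in_count (a2 := pred0)) ?count_pred0.
  by rewrite divn_small //; lia.
by move=> n; rewrite mem_iota /= => hn; apply/negbTE; lia.
Qed.

Lemma Xbound (S : pred nat) m c lX : is_conductor S c -> 0 < m ->
  (forall x, (x \in lX) = Xset S m x) -> forall a, a \in 0 :: lX -> a < c + m.
Proof.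
move=> [hc _] m0 hX a; rewrite in_cons => /orP [/eqP ->|]; first by lia.
rewrite hX => /andP [_ nS]; case: (leqP c (a - m)) => h; last by lia.
by rewrite hc in nS.
Qed.

Lemma sizeL (S : pred nat) m c lL lX : numerical_semigroup S -> is_multiplicity S m ->
  is_conductor S c -> uniq lL -> (forall x, (x \in lL) = Lset S c x) ->
  uniq lX -> (forall x, (x \in lX) = Xset S m x) ->
  size lL = \sum_(a <- 0 :: lX) (c + m - 1 - a) %/ m.
Proof.
move=> hS hm hc uL hL uX hX; have [_ m0 _] := hm.
have pe : perm_eq lL (filter S (iota 0 c)).
  apply: uniq_perm => //; first by rewrite filter_uniq ?iota_uniq.
  by move=> x; rewrite mem_filter mem_iota hL /Lset add0n.
rewrite (perm_size pe) size_filter count_sum.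
transitivity (\sum_(n <- iota 0 c) \sum_(a <- 0 :: lX) (((a <= n) && (a %% m == n %% m)) : nat)).
  by apply: eq_bigr => n _; rewrite (Scount hS hm uX hX) count_sum.
rewrite exchange_big /=; apply: eq_big_seq => a ha.
by rewrite -count_sum count_ap2 // (Xbound hc m0 hX ha).
Qed.

Lemma Pchar (S : pred nat) m x : is_multiplicity S m ->
  Pset S x = (x == m) || (~~ Dset S x && Xset S m x).
Proof.
move=> [Sm m0 mmin]; rewrite /Pset /Xset /Dset /Sstar.
case: eqP => [->|xm] /=.
  rewrite Sm m0 /=; apply/negP => /hasP [a _ /andP [/andP [/andP [Sa a0] _] am]].
  by have := mmin a Sa a0; lia.
case Sx: (S x) => /=; last by rewrite andbF.
case x0: (0 < x) => /=; last by rewrite andbF.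
case hD: (has _ _) => //=; apply/esym/negP => Sxm.
move/negbT: hD => /negP; apply; apply/hasP; exists m.
  by rewrite mem_iota /=; have := mmin x Sx x0; lia.
by rewrite Sm m0 Sxm /=; have := mmin x Sx x0; lia.
Qed.

Lemma sizeP (S : pred nat) m lP lX : S 0 -> is_multiplicity S m ->
  uniq lP -> (forall x, (x \in lP) = Pset S x) ->
  uniq lX -> (forall x, (x \in lX) = Xset S m x) ->
  size lP = (count (predC (Dset S)) lX).+1.
Proof.
move=> S0 hm uP hP uX hX; have [Sm m0 _] := hm.
have pe : perm_eq lP (m :: filter (predC (Dset S)) lX).
  apply: uniq_perm => //.
    by rewrite /= filter_uniq // mem_filter hX /Xset subnn S0 /= !andbF.
  by move=> x; rewrite hP (Pchar x hm) in_cons mem_filter hX.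
by rewrite (perm_size pe) /= size_filter.
Qed.

Lemma sizeX (S : pred nat) m c lX : numerical_semigroup S -> is_multiplicity S m ->
  is_conductor S c ->
  uniq lX -> (forall x, (x \in lX) = Xset S m x) -> size lX = m - 1.
Proof.
move=> [S0 Sadd _] hm [hc _] uX hX; have [Sm m0 _] := hm.
have inc := incongr Sadd Sm hX S0.
have pe : perm_eq (map (modn^~ m) lX) (iota 1 (m - 1)).
  apply: uniq_perm; last 2 first.
  - exact: iota_uniq.
  - move=> r; rewrite mem_iota; apply/mapP/idP.
      move=> [x hx ->]; have x0 : 0 < x by move: hx; rewrite hX => /andP [/andP []].
      have := inc 0 x (mem_head _ _) ltac:(by rewrite in_cons hx orbT) x0.
      rewrite mod0n => h; have := ltn_pmod x m0; lia.
    move=> hr.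
    have cm : c <= c * m by apply: leq_pmulr.
    have Sn : S (c * m + r) by apply: hc; lia.
    have [a ha /andP [_ am]] := exist_ap Sadd hm hX S0 Sn.
    rewrite modnMDl (@modn_small r) in am; last by lia.
    move: ha; rewrite in_cons => /orP [/eqP a0|ha].
      by rewrite a0 mod0n in am; lia.
    by exists a => //; rewrite (eqP am).
  rewrite map_inj_in_uniq // => x y hx hy /= e.
  have hx' : x \in 0 :: lX by rewrite in_cons hx orbT.
  have hy' : y \in 0 :: lX by rewrite in_cons hy orbT.
  case: (ltngtP x y) => // h.
    by have := inc x y hx' hy' h; rewrite e eqxx.
  by have := inc y x hy' hx' h; rewrite e eqxx.
by rewrite -(size_map (modn^~ m)) (perm_size pe) size_iota.
Qed.

Lemma sumz (s : seq nat) (f : nat -> nat) :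
  Posz (\sum_(x <- s) f x) = (\sum_(x <- s) (f x)%:Z)%R.
Proof. by elim: s => [|x s IH]; rewrite ?big_nil ?big_cons // PoszD IH. Qed.

Theorem corollary2p10 (S : pred nat) (m c : nat)
  (lP lL lX : seq nat) :
  numerical_semigroup S ->
  is_multiplicity S m ->
  is_conductor S c ->
  uniq lP -> (forall x, (x \in lP) = Pset S x) ->
  uniq lL -> (forall x, (x \in lL) = Lset S c x) ->
  uniq lX -> (forall x, (x \in lX) = Xset S m x) ->
  ((size lP)%:Z * (size lL)%:Z - c%:Z
   = (size lP)%:Z * tau m c lX - (count (Dset S) lX)%:Z * (depth m c)%:Z
     + rho m c)%R.
Proof.
move=> hS hm hc uP hP uL hL uX hX.
have [S0 _ _] := hS; have [Sm m0 _] := hm.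
rewrite (sizeL hS hm hc uL hL uX hX) big_cons subn0.
rewrite (sizeP S0 hm uP hP uX hX).
have hXs := sizeX hS hm hc uX hX.
have hcnt := count_predC (Dset S) lX.
have -> : tau m c lX = Posz (\sum_(x <- lX) (c + m - 1 - x) %/ m).
  rewrite sumz /tau; apply: eq_big_seq => x hx.
  have xb := Xbound hc m0 hX (a := x) ltac:(by rewrite in_cons hx orbT).
  by rewrite /delta subzn ?divz_nat //; lia.
have hm' : m = (count (predC (Dset S)) lX).+1 + count (Dset S) lX.
  by rewrite addSn [X in X.+1]addnC hcnt hXs subn1 prednK.
rewrite /rho /depth.
set q := (c + m - 1) %/ m.
set T := \sum_(_ <- _) _.
set e := count (predC (Dset S)) lX.
set d := count (Dset S) lX.
rewrite hm' PoszM PoszD !PoszD.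
ring.
Qed.
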